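(* Let $P$ be a projection algebra. If $p_1,\dots,p_k,q_1,\dots,q_l\in P$ satisfy $p_1\,\mathscr F\,p_2\,\mathscr F\cdots\mathscr F\,p_k$ and $q_1\,\mathscr F\,q_2\,\mathscr F\cdots\mathscr F\,q_l$, then $\theta_{p_1}\cdots\theta_{p_k}=\theta_{q_1}\cdots\theta_{q_l}$ implies $p_k=q_l$, and $\delta_{p_k}\cdots\delta_{p_1}=\delta_{q_l}\cdots\delta_{q_1}$ implies $p_1=q_1$.
   Context: Maps are written to the right of their arguments and composed left to right. A projection algebra is a set $P$ with maps $\theta_p,\delta_p:P\to P$ ($p\in P$) such that for all $p,q\in P$: $p\theta_p=p$, $p\delta_p=p$; $p\theta_{q\theta_p}=q\theta_p$, $p\delta_{q\delta_p}=q\delta_p$; $\theta_q\theta_{q\theta_p}=\theta_q\theta_p$, $\delta_q\delta_{q\delta_p}=\delta_q\delta_p$; $\theta_p\delta_p=\theta_p$, $\delta_p\theta_p=\delta_p$; $\theta_{p\delta_q}\theta_p=\theta_q\theta_p$, $\delta_{p\theta_q}\delta_p=\delta_q\delta_p$. The relation $p\,\mathscr F\,q$ means $p=q\delta_p$ and $q=p\theta_q$. *)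

(* Defs.v *)
From Stdlib Require Import List.
Import ListNotations.

(* Maps are written on the right and composed left to right.
   [theta p x] stands for  x θ_p  and [delta p x] for  x δ_p. *)
Record ProjAlg : Type := {
  carrier :> Type;
  theta : carrier -> carrier -> carrier;
  delta : carrier -> carrier -> carrier;
  ax_theta_id : forall p, theta p p = p;
  ax_delta_id : forall p, delta p p = p;
  ax_theta_2 : forall p q, theta (theta p q) p = theta p q;
  ax_delta_2 : forall p q, delta (delta p q) p = delta p q;
  ax_theta_3 : forall p q x, theta (theta p q) (theta q x) = theta p (theta q x);
  ax_delta_3 : forall p q x, delta (delta p q) (delta q x) = delta p (delta q x);
  ax_td : forall p x, delta p (theta p x) = theta p x;
  ax_dt : forall p x, theta p (delta p x) = delta p x;
  ax_theta_5 : forall p q x, theta p (theta (delta q p) x) = theta p (theta q x);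
  ax_delta_5 : forall p q x, delta p (delta (theta q p) x) = delta p (delta q x)
}.

Section Defs.
Variable P : ProjAlg.

Definition relF (p q : P) : Prop := p = delta P p q /\ q = theta P q p.

Fixpoint Fchain (p : P) (ps : list P) : Prop :=
  match ps with
  | [] => True
  | q :: qs => relF p q /\ Fchain q qs
  end.

(* θ_{p_1} θ_{p_2} ... θ_{p_k}  (first apply θ_{p_1}, then θ_{p_2}, ...) *)
Definition theta_word (ps : list P) : P -> P :=
  fun x => fold_left (fun y p => theta P p y) ps x.
Definition delta_word (ps : list P) : P -> P :=
  fun x => fold_left (fun y p => delta P p y) ps x.
End Defs.

(* Main.v *)
Require Import Defs.
From Stdlib Require Import List.
Import ListNotations.

Lemma last_cons' {A} (q p : A) qs : last (q :: qs) p = last qs q.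
Proof. revert q p; induction qs as [|a qs IH]; intros q p; [reflexivity|].
  change (last (a :: qs) p = last (a :: qs) q). rewrite !IH. reflexivity. Qed.

Lemma theta_idem (P : ProjAlg) (p x : P) : theta P p (theta P p x) = theta P p x.
Proof. rewrite <- (ax_td P p x) at 1. rewrite ax_dt. apply ax_td. Qed.

Lemma delta_idem (P : ProjAlg) (p x : P) : delta P p (delta P p x) = delta P p x.
Proof. rewrite <- (ax_dt P p x) at 1. rewrite ax_td. apply ax_dt. Qed.

Lemma foldA (P : ProjAlg) ps (p : P) : Fchain P p ps ->
  fold_left (fun y q => theta P q y) ps p = last ps p.
Proof.
  revert p; induction ps as [|q qs IH]; intros p H; cbn [fold_left]; auto.
  destruct H as [[H1 H2] H3]. rewrite <- H2, last_cons'. auto.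
Qed.

Lemma foldB (P : ProjAlg) ps (p y : P) : theta P p y = y ->
  theta P (last ps p) (fold_left (fun y q => theta P q y) ps y)
  = fold_left (fun y q => theta P q y) ps y.
Proof.
  revert p y; induction ps as [|q qs IH]; intros p y H; cbn [fold_left]; auto.
  rewrite last_cons'. apply IH. apply theta_idem.
Qed.

Lemma foldD (P : ProjAlg) ps (p : P) : Fchain P p ps ->
  fold_left (fun y q => delta P q y) (rev ps ++ [p]) (last ps p) = p.
Proof.
  revert p; induction ps as [|q qs IH]; intros p H.
  - apply ax_delta_id.
  - destruct H as [[H1 H2] H3]. rewrite last_cons'.
    change (rev (q::qs)) with (rev qs ++ [q]).
    rewrite fold_left_app. rewrite IH by auto.
    simpl. auto.
Qed.

Lemma foldE (P : ProjAlg) ps (p x : P) :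
  delta P p (fold_left (fun y q => delta P q y) (rev ps ++ [p]) x)
  = fold_left (fun y q => delta P q y) (rev ps ++ [p]) x.
Proof. rewrite fold_left_app. simpl. apply delta_idem. Qed.

Theorem lemma4p14 (P : ProjAlg) (p1 : P) (ps : list P) (q1 : P) (qs : list P) :
  Fchain P p1 ps -> Fchain P q1 qs ->
  ((forall x : P, theta_word P (p1 :: ps) x = theta_word P (q1 :: qs) x) ->
     last ps p1 = last qs q1) /\
  ((forall x : P, delta_word P (rev (p1 :: ps)) x = delta_word P (rev (q1 :: qs)) x) ->
     p1 = q1).
Proof.
  intros Hp Hq. split; intros Hw.
  - assert (E1 : theta P (last qs q1) (last ps p1) = last ps p1).
    { rewrite <- (foldA P ps p1 Hp). rewrite <- (ax_theta_id P p1) at 1 2.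
      pose proof (Hw p1) as E. unfold theta_word in E. simpl in E. rewrite E.
      apply foldB. apply theta_idem. }
    assert (E2 : theta P (last ps p1) (last qs q1) = last qs q1).
    { rewrite <- (foldA P qs q1 Hq). rewrite <- (ax_theta_id P q1) at 1 2.
      pose proof (Hw q1) as E. unfold theta_word in E. simpl in E. rewrite <- E.
      apply foldB. apply theta_idem. }
    pose proof (ax_theta_2 P (last ps p1) (last qs q1)) as A.
    rewrite E2 in A. congruence.
  - assert (E1 : delta P q1 p1 = p1).
    { rewrite <- (foldD P ps p1 Hp) at 1 2.
      pose proof (Hw (last ps p1)) as E. unfold delta_word in E. simpl in E. rewrite E.
      apply foldE. }
    assert (E2 : delta P p1 q1 = q1).
    { rewrite <- (foldD P qs q1 Hq) at 1 2.
      pose proof (Hw (last qs q1)) as E. unfold delta_word in E. simpl in E. rewrite <- E.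
      apply foldE. }
    pose proof (ax_delta_2 P p1 q1) as A.
    rewrite E2 in A. congruence.
Qed.
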